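(* Let $X$ be a locally compact, Hausdorff, second countable space and $(Y,d)$ a complete metric space. A net $(f_\lambda)$ in $C_{od}(X,Y)$ is $\gamma$-Cauchy if and only if $(f_\lambda)$ converges in $\tau_{\iota,D}$ to some $f\in C_{od}(X,Y)$.
   Context: $C_{od}(X,Y)$ is the set of continuous functions $f:\mathrm{dom}(f)\to Y$ whose domain is an open subset of $X$ (including the empty function). $CL(X)$ is the set of closed subsets of $X$ (including $\emptyset$) with the Fell topology, generated by $(X\setminus K)^+=\{A: A\subseteq X\setminus K\}$ ($K$ compact) and $V^-=\{A: A\cap V\neq\emptyset\}$ ($V$ nonempty open). Let $D(f)=X\setminus\mathrm{dom}(f)$. The topology $\tau_{\iota,D}$ on $C_{od}(X,Y)$ is generated by the sets $\langle K,V\rangle=\{f: K\subseteq\mathrm{dom}(f),\ f(K)\subseteq V\}$ ($K\subseteq X$ compact, $V\subseteq Y$ open) and $D^{-1}(W)$ ($W$ Fell-open). A net $(f_\lambda)$ in $C_{od}(X,Y)$ is called $\gamma$-Cauchy if $(D(f_\lambda))$ converges in the Fell topology to some $A\in CL(X)$ and, in case $A\neq X$, for every nonempty compact $K\subseteq X\setminus A$ there exists $\lambda_K$ such that $K\subseteq\mathrm{dom}(f_\lambda)$ for all $\lambda>\lambda_K$ and the net $(f_\lambda|_K)_{\lambda>\lambda_K}$ is uniformly Cauchy. *)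

(* Defs.v *)
From HB Require Import structures.
From mathcomp Require Import all_boot all_order all_algebra.
From mathcomp Require Import all_classical all_reals.
From mathcomp Require Import topology normedtype.
From mathcomp Require Import metric_structure.

Set Implicit Arguments.
Unset Strict Implicit.
Unset Printing Implicit Defensive.

Import Order.TTheory GRing.Theory Num.Theory.
Local Open Scope classical_set_scope.
Local Open Scope ring_scope.

Inductive gen_open (T : Type) (S : set (set T)) : set T -> Prop :=
  | gen_open_sub U : S U -> gen_open S U
  | gen_open_setT : gen_open S setT
  | gen_open_setI U V : gen_open S U -> gen_open S V -> gen_open S (U `&` V)
  | gen_open_bigcup (J : Type) (F : J -> set T) :
      (forall j, gen_open S (F j)) -> gen_open S (\bigcup_j F j).

Definition directed (I : Type) (le : I -> I -> Prop) : Prop :=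
  [/\ (exists i : I, True),
      (forall i, le i i),
      (forall i j k, le i j -> le j k -> le i k) &
      (forall i j, exists k, le i k /\ le j k)].

Definition net_conv (I : Type) (le : I -> I -> Prop) (T : Type)
    (S : set (set T)) (x : I -> T) (l : T) : Prop :=
  forall U, gen_open S U -> U l -> exists i0, forall i, le i0 i -> U (x i).

Definition complete_metric (R : realType) (Y : metricType R) : Prop :=
  forall u : nat -> Y,
    (forall e : R, 0 < e -> exists N : nat, forall m n : nat,
        (N <= m)%N -> (N <= n)%N -> mdist (u m) (u n) < e) ->
    exists l : Y, u @ \oo --> l.

(** A function is represented by its domain
    and a total map whose restriction to the domain is continuous; values
    outside the domain are irrelevant to everything below. *)
Record Cod (X Y : topologicalType) := MkCod {
  cdom : set X;
  cdom_open : open cdom;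
  cfun : X -> Y;
  cfun_cont : {within cdom, continuous cfun} }.

Definition Dc (X Y : topologicalType) (f : Cod X Y) : set X := ~` cdom f.

Definition fell_subbase (X : topologicalType) : set (set (set X)) :=
  [set W | (exists K : set X, compact K /\ W = [set A | A `<=` ~` K]) \/
           (exists V : set X, [/\ open V, V !=set0 &
                               W = [set A | A `&` V !=set0]])].

Definition fell_open (X : topologicalType) := gen_open (@fell_subbase X).

Definition tauD_subbase (X Y : topologicalType) : set (set (Cod X Y)) :=
  [set U | (exists (K : set X) (V : set Y), [/\ compact K, open V &
              U = [set f | K `<=` cdom f /\ cfun f @` K `<=` V]]) \/
           (exists W : set (set X), fell_open W /\ U = [set f | W (Dc f)])].

Definition gamma_cauchy (R : realType) (X : topologicalType) (Y : metricType R)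
    (I : Type) (le : I -> I -> Prop) (F : I -> Cod X Y) : Prop :=
  exists A : set X,
    [/\ closed A,
        net_conv le (@fell_subbase X) (fun i => Dc (F i)) A &
        A <> setT ->
        forall K : set X, compact K -> K !=set0 -> K `<=` ~` A ->
        exists iK : I,
          (forall i, le iK i -> K `<=` cdom (F i)) /\
          (forall e : R, 0 < e -> exists i0 : I, le iK i0 /\
             forall i j, le iK i -> le iK j -> le i0 i -> le i0 j ->
             forall x, K x -> mdist (cfun (F i) x) (cfun (F j) x) < e)].

(* Main.v *)
Require Import Defs.
From HB Require Import structures.
From mathcomp Require Import all_boot all_order all_algebra.
From mathcomp Require Import all_classical all_reals.
From mathcomp Require Import topology normedtype.
From mathcomp Require Import metric_structure.
From mathcomp Require Import lra.

Import Order.TTheory GRing.Theory Num.Theory.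
Local Open Scope classical_set_scope.
Local Open Scope ring_scope.

Lemma net_conv_sub (I : Type) (le : I -> I -> Prop) (T : Type)
  (S : set (set T)) (x : I -> T) (l : T) : directed le ->
  (forall U, S U -> U l -> exists i0, forall i, le i0 i -> U (x i)) ->
  net_conv le S x l.
Proof.
case=> [[i00 _] _ tr dir] H U gU; elim: gU.
- exact: H.
- by move=> _; exists i00.
- move=> U1 U2 _ IH1 _ IH2 [/IH1 [a Ha] /IH2 [b Hb]].
  have [k [ak bk]] := dir a b; exists k => i ki; split.
    by apply: Ha; exact: tr ak ki.
  by apply: Hb; exact: tr bk ki.
- move=> J G _ IH [j _ /IH [a Ha]]; exists a => i ai; exists j => //.
  exact: Ha.
Qed.

Definition evnet (I : Type) (le : I -> I -> Prop) : set_system I :=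
  [set P | exists i0, forall i, le i0 i -> P i].
Arguments evnet {I}.

Lemma evn_filter (I : Type) (le : I -> I -> Prop) : directed le ->
  Filter (evnet le).
Proof.
case=> [[i00 _] _ tr dir]; split.
- by exists i00.
- move=> P Q [a Ha] [b Hb]; have [k [ak bk]] := dir a b; exists k => i ki.
  by split; [apply: Ha; exact: tr ak ki| apply: Hb; exact: tr bk ki].
- by move=> P Q PQ [a Ha]; exists a => i /Ha /PQ.
Qed.

Lemma exists_inv_lt (R : realType) (e : R) : 0 < e ->
  exists N : nat, N.+1%:R^-1 < e.
Proof.
move=> e0; exists (Num.truncn e^-1).
rewrite invf_plt ?posrE ?ltr0n //; exact: truncnS_gt.
Qed.

Lemma cont_mdist (R : realType) (X : topologicalType) (Y : metricType R)
  (f : X -> Y) x : {for x, continuous f} ->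
  forall e : R, 0 < e -> \forall z \near x, mdist (f x) (f z) < e.
Proof.
move=> cf e e0; have := cf _ (nbhsx_ballx (f x) e e0).
by rewrite ballEmdist.
Qed.

Lemma nbhs_mdist (R : realType) (Y : metricType R) (y : Y) (V : set Y) :
  nbhs y V -> exists2 r : R, 0 < r & forall z, mdist y z < r -> V z.
Proof.
move/nbhs_ballP => [r r0 H]; exists r => // z hz; apply: H.
by rewrite ballEmdist.
Qed.

Lemma mdist_open (R : realType) (Y : metricType R) (y : Y) (r : R) :
  open [set z | mdist y z < r].
Proof.
rewrite openE => z /= hz; apply/nbhs_ballP.
exists (r - mdist y z).
  by rewrite /= subr_gt0.
move=> w; rewrite ballEmdist /= => hw.
have := metric_triangle y z w; move=> h; apply: (le_lt_trans h).
by rewrite -ltrBrDl.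
Qed.

Lemma net_cauchy_lim (R : realType) (Y : metricType R) (I : Type)
  (le : I -> I -> Prop) (u : I -> Y) : complete_metric Y -> directed le ->
  (forall e : R, 0 < e -> exists i0, forall i j, le i0 i -> le i0 j ->
     mdist (u i) (u j) < e) ->
  exists l, forall e : R, 0 < e -> exists i0, forall i, le i0 i ->
     mdist (u i) l < e.
Proof.
move=> hY [[i00 _] rf tr dir] hc.
have hc' : forall n : nat, exists i0, forall i j, le i0 i -> le i0 j ->
    mdist (u i) (u j) < n.+1%:R^-1.
  by move=> n; apply: hc; rewrite invr_gt0 ltr0n.
have [c hcc] := choice hc'.
have [up hup] := choice (fun p : I * I => dir p.1 p.2).
pose j := fix j n := if n is m.+1 then up (j m, c n) else c 0%N.
have jc : forall n, le (c n) (j n).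
  by case=> [|n]; [exact: rf | exact: (hup (j n, c n.+1)).2].
have jmono : forall m n, (m <= n)%N -> le (j m) (j n).
  move=> m; elim=> [|n IH].
    by rewrite leqn0 => /eqP ->; exact: rf.
  rewrite leq_eqVlt => /orP [/eqP -> | ]; first exact: rf.
  rewrite ltnS => /IH h; exact: tr h (hup (j n, c n.+1)).1.
have key : forall N m, (N <= m)%N -> le (c N) (j m).
  by move=> N m h; exact: tr (jc N) (jmono N m h).
have [l hl] : exists l : Y, (fun n => u (j n)) @ \oo --> l.
  apply: hY => e e0; have [N hN] := @exists_inv_lt R e e0.
  exists N => m n hm hn; apply: lt_trans hN.
  by apply: hcc; apply: key.
exists l => e e0.
have e20 : 0 < e / 2 by rewrite divr_gt0.
have [N hN] := @exists_inv_lt R _ e20.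
exists (c N) => i hi.
have := hl _ (nbhsx_ballx l (e / 2) e20).
case=> M _ HM.
have := HM (maxn M N) (leq_maxl _ _); rewrite ballEmdist /= => h1.
have h2 := hcc N i (j (maxn M N)) hi (key _ _ (leq_maxr _ _)).
apply: (le_lt_trans (metric_triangle _ (u (j (maxn M N))) _)).
rewrite (splitr e) ltrD //; first exact: lt_trans hN.
by rewrite metric_sym.
Qed.

Lemma net_lim_bound (R : realType) (Y : metricType R) (I : Type)
  (le : I -> I -> Prop) (u : I -> Y) (l : Y) (i0 : I) (e : R) :
  directed le ->
  (forall e : R, 0 < e -> exists i0, forall i, le i0 i -> mdist (u i) l < e) ->
  (forall i j, le i0 i -> le i0 j -> mdist (u i) (u j) < e) ->
  forall i, le i0 i -> mdist (u i) l <= e.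
Proof.
move=> [_ rf tr dir] hl hc i hi; apply/ler_addgt0Pr => d d0.
have [i1 h1] := hl d d0; have [k [ik i1k]] := dir i i1.
apply: ltW; apply: (le_lt_trans (metric_triangle _ (u k) _)).
apply: ltrD; last exact: h1.
by apply: hc => //; exact: tr hi ik.
Qed.

Lemma cnbhd (X : topologicalType) : locally_compact [set: X] ->
  hausdorff_space X -> forall (O : set X) x, open O -> O x ->
  exists K, [/\ compact K, nbhs x K & K `<=` O].
Proof.
move=> lc hX O x oO Ox.
have [C Cx [cC clC]] := lc x Logic.I.
rewrite withinET in Cx.
have reg := compact_regular hX cC Cx.
have COx : nbhs x (C `&` O) by apply: filterI => //; exact: open_nbhs_nbhs.
have [W Wx WCO] := reg _ COx.
exists (closure W); split.
- apply: (subclosed_compact _ cC); first exact: closed_closure.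
  by move=> z /WCO [].
- by apply: filterS Wx; exact: subset_closure.
- by move=> z /WCO [].
Qed.

Lemma compact_mdist_le (R : realType) (X : topologicalType) (Y : metricType R)
  (K : set X) (h : X -> Y) (c : Y) (r : R) : compact K ->
  (forall p, K p -> {for p, continuous h}) ->
  compact (K `&` [set z | mdist c (h z) <= r]).
Proof.
move=> cK hc G PG GK.
have GK' : G K by apply: filterS GK => z [].
have [p [Kp clp]] := cK G PG GK'.
exists p; split => //; split => //=.
rewrite leNgt; apply/negP => hp.
have d0 : 0 < mdist c (h p) - r by rewrite subr_gt0.
have N := @cont_mdist R X Y h p (hc p Kp) _ d0.
have [z [[_ /= zr] zN]] := clp _ _ GK N.
have := metric_triangle c (h p) (h z).
move: zN => /= zN.
have : mdist c (h p) <= mdist c (h z) + mdist (h p) (h z).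
  have := metric_triangle c (h z) (h p); rewrite (metric_sym (h z)).
  done.
move=> t; have : mdist c (h p) < r + (mdist c (h p) - r).
  apply: (le_lt_trans t); apply: ler_ltD => //.
by rewrite addrC subrK ltxx.
Qed.

Lemma cod_cont (X Y : topologicalType) (f : Cod X Y) x : cdom f x ->
  {for x, continuous (cfun f)}.
Proof.
move=> dx; have := @cfun_cont X Y f.
rewrite continuous_open_subspace; last exact: cdom_open.
by apply; rewrite inE.
Qed.

Lemma dir2 (R : realType) (X : topologicalType) (Y : metricType R)
    (I : Type) (le : I -> I -> Prop) (hI : directed le) (F : I -> Cod X Y)
    (f : Cod X Y) :
  net_conv le (@tauD_subbase X Y) F f -> gamma_cauchy le F.
Proof.
move=> hc; have FF := @evn_filter I le hI.
have [[i00 _] rf tr dir] := hI.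
exists (Dc f); split.
- exact: open_closedC (cdom_open f).
- move=> W gW Wf; apply: (hc [set h | W (Dc h)]) => //.
  by apply: gen_open_sub; right; exists W; split.
move=> _ K cK _ KA.
have Kd : K `<=` cdom f by move=> z Kz; have := KA z Kz; rewrite /Dc setCK.
have U1 : gen_open (@tauD_subbase X Y)
    [set h | K `<=` cdom h /\ cfun h @` K `<=` setT].
  by apply: gen_open_sub; left; exists K, setT; split => //; exact: openT.
have [iK HK] := hc _ U1 (conj Kd (fun _ _ => Logic.I)).
exists iK; split; first by move=> i /HK [].
have claim : forall e : R, 0 < e -> \forall i \near evnet le,
    K `<=` [set z | mdist (cfun f z) (cfun (F i) z) < e].
  move=> e e0.
  have ncw : near_covering_within K.
    by apply/near_covering_withinP/compact_near_coveringP.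
  apply: ncw => x Kx.
  have cx := @cod_cont X Y f x (Kd x Kx).
  pose K' := K `&` [set z | mdist (cfun f x) (cfun f z) <= e / 4].
  pose V := [set y | mdist (cfun f x) y < e / 2].
  have cK' : compact K'.
    apply: compact_mdist_le => // p Kp; exact: @cod_cont X Y f p (Kd p Kp).
  have U2 : gen_open (@tauD_subbase X Y)
      [set h | K' `<=` cdom h /\ cfun h @` K' `<=` V].
    apply: gen_open_sub; left; exists K', V; split => //.
    exact: mdist_open.
  have fU2 : K' `<=` cdom f /\ cfun f @` K' `<=` V.
    split; first by move=> z [Kz _]; exact: Kd.
    move=> _ [z [_ /= hz] <-]; rewrite /V /=; apply: (le_lt_trans hz).
    lra.
  have e40 : 0 < e / 4 by lra.
  exists ([set z | mdist (cfun f x) (cfun f z) < e / 4],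
          [set i | K' `<=` cdom (F i) /\ cfun (F i) @` K' `<=` V]).
    split; first exact: (@cont_mdist R X Y (cfun f) x cx _ e40).
    exact: hc _ U2 fU2.
  case=> x' i /= [dx' [_ hV]] Kx'.
  have : V (cfun (F i) x').
    apply: hV; exists x' => //; split => //=; exact: ltW.
  rewrite /V /= => hV'.
  apply: (le_lt_trans (metric_triangle _ (cfun f x) _)).
  rewrite metric_sym.
  have : mdist (cfun f x) (cfun f x') + mdist (cfun f x) (cfun (F i) x')
      < e / 4 + e / 2 by exact: ltrD.
  move=> h; apply: (lt_le_trans h); lra.
move=> e e0.
have e20 : 0 < e / 2 by lra.
have [a Ha] := claim _ e20.
have [k [iKk ak]] := dir iK a.
exists k; split => // i j _ _ ki kj z Kz.
have hi := Ha i (tr _ _ _ ak ki) z Kz.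
have hj := Ha j (tr _ _ _ ak kj) z Kz.
apply: (le_lt_trans (metric_triangle _ (cfun f z) _)).
rewrite metric_sym.
have := ltrD hi hj; move=> h; apply: (lt_le_trans h); lra.
Qed.

Lemma dir1 (R : realType) (X : topologicalType) (Y : metricType R)
    (hX_lc : locally_compact [set: X]) (hX_T2 : hausdorff_space X)
    (hY : complete_metric Y)
    (I : Type) (le : I -> I -> Prop) (hI : directed le) (F : I -> Cod X Y) :
  gamma_cauchy le F -> exists f : Cod X Y, net_conv le (@tauD_subbase X Y) F f.
Proof.
move=> [A [cA hD hK]].
have FF := @evn_filter I le hI.
have [[i00 _] rf tr dir] := hI.
have hpt : forall z, exists l : Y, ~ A z -> forall e : R, 0 < e ->
    exists i0, forall i, le i0 i -> mdist (cfun (F i) z) l < e.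
  move=> z; have [Az|nAz] := pselect (A z).
    by exists (cfun (F i00) z).
  have AT : A <> setT by move=> AT; apply: nAz; rewrite AT.
  have [iK [_ HC]] := hK AT [set z] (@compact_set1 X z) (ex_intro _ z erefl)
    (fun w wz => eq_ind_r (fun w => ~ A w) nAz wz).
  have hcz : forall e : R, 0 < e -> exists i0, forall i j, le i0 i -> le i0 j ->
      mdist (cfun (F i) z) (cfun (F j) z) < e.
    move=> e e0; have [i0 [Ki0 Hi0]] := HC e e0; exists i0 => i j hi hj.
    by apply: Hi0 => //; [exact: tr Ki0 hi | exact: tr Ki0 hj].
  have [l hl] := @net_cauchy_lim R Y I le (fun i => cfun (F i) z) hY hI hcz.
  by exists l.
have [g hg] := choice hpt.
have UC : forall K, compact K -> K `<=` ~` A -> forall e : R, 0 < e ->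
    exists i0, forall i, le i0 i -> K `<=` cdom (F i) /\
      forall z, K z -> mdist (cfun (F i) z) (g z) <= e.
  move=> K cK KA e e0; case: (pselect (K !=set0)) => [Kne|K0].
    have AT : A <> setT.
      move=> AT; case: Kne => z Kz; have := KA z Kz; rewrite AT /=; by apply.
    have [iK [HKd HC]] := hK AT K cK Kne KA.
    have [i0 [Ki0 Hi0]] := HC e e0.
    exists i0 => i hi; split; first exact: HKd (tr _ _ _ Ki0 hi).
    move=> z Kz.
    apply: (@net_lim_bound R Y I le (fun i => cfun (F i) z) (g z) i0 e hI
             (hg z (KA z Kz))) => // i1 j1 h1 h2.
    by apply: Hi0 => //; [exact: tr Ki0 h1 | exact: tr Ki0 h2].
  exists i00 => i _; split => z Kz; exfalso; apply: K0; by exists z.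
have gc : forall x, ~ A x -> {for x, continuous g}.
  move=> x nAx.
  have [K [cK Kx KA]] := @cnbhd X hX_lc hX_T2 _ x (closed_openC cA) nAx.
  move=> V /nbhs_ballP [r r0 hr].
  have r0' : 0 < r := r0.
  have r30 : 0 < r / 3 by lra.
  have [i0 Hi0] := UC K cK KA (r / 3) r30.
  have [Kdi Hi] := Hi0 i0 (rf i0).
  have ci := @cod_cont X Y (F i0) x (Kdi x (nbhs_singleton Kx)).
  have N := filterI Kx (@cont_mdist R X Y _ x ci (r / 3) r30).
  suff : nbhs x [set z | V (g z)] by [].
  apply: (@filterS X (nbhs x) (nbhs_filter x) _ _ _ (N (nbhs_filter x))) => z [Kz dz]; apply: hr; rewrite ballEmdist /=.
  have t1 := metric_triangle (g x) (cfun (F i0) x) (g z).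
  have t2 := metric_triangle (cfun (F i0) x) (cfun (F i0) z) (g z).
  have h1 := Hi x (nbhs_singleton Kx); rewrite metric_sym in h1.
  have h3 := Hi z Kz.
  lra.
have gcont : {within ~` A, continuous g}.
  apply: continuous_in_subspaceT => x; rewrite inE => /gc; exact.
exists (@MkCod X Y (~` A) (closed_openC cA) g gcont).
apply: (@net_conv_sub I le (Cod X Y) _ _ _ hI) => U [[K [V [cK oV ->]]] | [W [fW ->]]] /=.
  move=> [KA gKV].
  have ncw : near_covering_within K.
    by apply/near_covering_withinP/compact_near_coveringP.
  have claim : \forall i \near evnet le, K `<=` [set z | V (cfun (F i) z)].
    apply: ncw => x Kx.
    have nAx := KA x Kx.
    have Vg : V (g x) by apply: gKV; exists x.
    have nV : nbhs (g x) V by move: oV; rewrite openE => /(_ _ Vg).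
    have [r r0 hr] := @nbhs_mdist R Y _ _ nV.
    have r40 : 0 < r / 4 by lra.
    have r20 : 0 < r / 2 by lra.
    have [i0 Hi0] := UC K cK KA (r / 4) r40.
    exists ([set z | mdist (g x) (g z) < r / 2], [set i | le i0 i]).
      split; first exact: (@cont_mdist R X Y g x (gc x nAx) _ r20).
      by exists i0.
    case=> x' i /= [dx' hi] Kx'; apply: hr.
    have h := (Hi0 i hi).2 x' Kx'.
    have t := metric_triangle (g x) (g x') (cfun (F i) x').
    rewrite (metric_sym (g x')) in t.
    lra.
  case: claim => a Ha.
  have [b Hb] := UC K cK KA 1 ltr01.
  have [k [ak bk]] := dir a b.
  exists k => i ki; split; first exact: (Hb i (tr _ _ _ bk ki)).1.
  by move=> _ [z Kz <-]; exact: Ha i (tr _ _ _ ak ki) z Kz.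
rewrite /Dc /= setCK => WA.
exact: hD W fW WA.
Qed.

Theorem mainTheorem8 (R : realType) (X : topologicalType) (Y : metricType R)
    (hX_lc : locally_compact [set: X]) (hX_T2 : hausdorff_space X)
    (hX_2c : @second_countable X) (hY : complete_metric Y)
    (I : Type) (le : I -> I -> Prop) (hI : directed le) (F : I -> Cod X Y) :
  gamma_cauchy le F <->
  exists f : Cod X Y, net_conv le (@tauD_subbase X Y) F f.
Proof.
split; first exact: dir1.
by case=> f; exact: dir2.
Qed.
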